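(* Every non-isotropic vector $\alpha\in A_N$ (i.e. $q_N(\alpha)=1$) is represented by $(r+\rho(r))/2\bmod N$ for a suitable $r\in N$ with $r^2=-2$.
   Context: Lattices: $U$ has Gram matrix $\begin{pmatrix}0&1\\1&0\end{pmatrix}$; $D_4$ negative definite; $U(2)$ is $U$ with doubled form. $N=U\oplus U(2)\oplus D_4\oplus D_4$, $A_N=N^*/N\cong\mathbb F_2^6$, $q_N:A_N\to\mathbb Z/2\mathbb Z$, $q_N(x)=\langle x,x\rangle\bmod2\mathbb Z$ (values lie in $\mathbb Z/2\mathbb Z$). $\rho=\rho_1\oplus\rho_0\oplus\rho_0\in O(N)$, where for $D_4=\{x\in\mathbb Z^4:\sum x_i\equiv0\bmod 2\}$ (negative standard inner product) $\rho_0(x_1,x_2,x_3,x_4)=(x_2,-x_1,x_4,-x_3)$, and for standard hyperbolic bases $e,f$ of $U$, $e',f'$ of $U(2)$, $\rho_1(e)=-e-e'$, $\rho_1(f)=f-f'$, $\rho_1(e')=e'+2e$, $\rho_1(f')=2f-f'$. For $r\in N$, $r^2=-2$, one has $(r+\rho(r))/2\in N^*$. *)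

(* Defs.v *)
From HB Require Import structures.
From mathcomp Require Import all_boot all_order all_algebra.
Set Implicit Arguments. Unset Strict Implicit. Unset Printing Implicit Defensive.
Import Order.TTheory GRing.Theory Num.Theory.
Local Open Scope ring_scope.

(* N = U (+) U(2) (+) D4 (+) D4, realised inside Q^12 (row vectors).
   Coordinates: 0 -> e, 1 -> f (basis of U); 2 -> e', 3 -> f' (basis of U(2));
   4..7 -> first D4 (standard coordinates of Z^4); 8..11 -> second D4. *)
Definition lat_vec := 'rV[rat]_12.

Definition lat_gram : 'M[rat]_12 :=
  \matrix_(i < 12, j < 12)
    (if ((i == 0%N :> nat) && (j == 1%N :> nat)) || ((i == 1%N :> nat) && (j == 0%N :> nat)) then 1
     else if ((i == 2%N :> nat) && (j == 3%N :> nat)) || ((i == 3%N :> nat) && (j == 2%N :> nat)) then 2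
     else if (4 <= i)%N && (i == j) then -1
     else 0).

Definition lat_form (x y : lat_vec) : rat := (x *m lat_gram *m y^T) 0 0.

Definition lat_coord (x : lat_vec) (k : nat) : rat := x 0 (inord k).

Definition inN (x : lat_vec) : Prop :=
  (forall i : 'I_12, x 0 i \is a Num.int) /\
  ((lat_coord x 4 + lat_coord x 5 + lat_coord x 6 + lat_coord x 7) / 2 \is a Num.int) /\
  ((lat_coord x 8 + lat_coord x 9 + lat_coord x 10 + lat_coord x 11) / 2 \is a Num.int).

Definition inNdual (x : lat_vec) : Prop :=
  forall y : lat_vec, inN y -> lat_form x y \is a Num.int.

(* q_N(x) = <x,x> mod 2Z equals 1, for x in the dual lattice *)
Definition qN_is_one (x : lat_vec) : Prop :=
  exists k : int, lat_form x x = (2 * k + 1)%:~R.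

Definition lat_rho (x : lat_vec) : lat_vec :=
  \row_(i < 12)
    match nat_of_ord i with
    | 0 => - lat_coord x 0 + 2 * lat_coord x 2
    | 1 => lat_coord x 1 + 2 * lat_coord x 3
    | 2 => - lat_coord x 0 + lat_coord x 2
    | 3 => - lat_coord x 1 - lat_coord x 3
    | 4 => lat_coord x 5
    | 5 => - lat_coord x 4
    | 6 => lat_coord x 7
    | 7 => - lat_coord x 6
    | 8 => lat_coord x 9
    | 9 => - lat_coord x 8
    | 10 => lat_coord x 11
    | 11 => - lat_coord x 10
    | _ => 0
    end.

(* Main.v *)
Require Import Defs.
From HB Require Import structures.
From mathcomp Require Import all_boot all_order all_algebra.
From mathcomp Require Import ring lra.
Import Order.TTheory GRing.Theory Num.Theory.
Local Open Scope ring_scope.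
Notation c := lat_coord.
Lemma coordE (x : lat_vec) (i : 'I_12) : x 0 i = c x i.
Proof. by rewrite /lat_coord inord_val. Qed.

Definition g (i j : nat) : rat :=
    (if ((i == 0%N) && (j == 1%N)) || ((i == 1%N) && (j == 0%N)) then 1
     else if ((i == 2%N) && (j == 3%N)) || ((i == 3%N) && (j == 2%N)) then 2
     else if (4 <= i)%N && (i == j) then -1
     else 0).

Lemma form_sum x y : lat_form x y =
  \sum_(0 <= j < 12) (\sum_(0 <= i < 12) c x i * g i j) * c y j.
Proof.
rewrite /lat_form !mxE big_mkord; apply: eq_bigr => j _.
rewrite !mxE coordE big_mkord; congr (_ * _); apply: eq_bigr => i _.
by rewrite !mxE coordE.
Qed.

Lemma form_eq x y : lat_form x y =
  c x 0 * c y 1 + c x 1 * c y 0 + 2*(c x 2 * c y 3 + c x 3 * c y 2)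
  - (c x 4 * c y 4 + c x 5 * c y 5 + c x 6 * c y 6 + c x 7 * c y 7
   + c x 8 * c y 8 + c x 9 * c y 9 + c x 10 * c y 10 + c x 11 * c y 11).
Proof.
rewrite form_sum /index_iota /= !big_cons !big_nil /g /=.
rewrite !(mul0r, mulr0, add0r, addr0, mulr1).
ring.
Qed.

Definition mkv (f : nat -> rat) : lat_vec := \row_(i < 12) f (nat_of_ord i).

Lemma coord_mkv f k : (k < 12)%N -> c (mkv f) k = f k.
Proof. by move=> hk; rewrite /lat_coord /mkv mxE inordK. Qed.

Lemma combE s u v w k : c (s *: (u + v) - w) k = s * (c u k + c v k) - c w k.
Proof. by rewrite /lat_coord !mxE. Qed.

Lemma rhoE x k : (k < 12)%N -> c (lat_rho x) k =
    match k with
    | 0 => - c x 0 + 2 * c x 2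
    | 1 => c x 1 + 2 * c x 3
    | 2 => - c x 0 + c x 2
    | 3 => - c x 1 - c x 3
    | 4 => c x 5
    | 5 => - c x 4
    | 6 => c x 7
    | 7 => - c x 6
    | 8 => c x 9
    | 9 => - c x 8
    | 10 => c x 11
    | 11 => - c x 10
    | _ => 0
    end.
Proof. by move=> hk; rewrite {1}/lat_coord mxE inordK. Qed.

Lemma inN_of x : (forall k, (k < 12)%N -> c x k \is a Num.int) ->
  (c x 4 + c x 5 + c x 6 + c x 7) / 2 \is a Num.int ->
  (c x 8 + c x 9 + c x 10 + c x 11) / 2 \is a Num.int -> inN x.
Proof. by move=> H H1 H2; split; [move=> i; rewrite coordE; apply: H|split]. Qed.

Lemma eqint (y x : rat) : x = y -> y \is a Num.int -> x \is a Num.int.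
Proof. by move=> ->. Qed.

Definition tv (s : seq rat) := mkv (fun k => nth 0 s k).

Lemma tv_inN s : (forall k, (k < 12)%N -> nth 0 s k \is a Num.int) ->
  (nth 0 s 4 + nth 0 s 5 + nth 0 s 6 + nth 0 s 7) / 2 \is a Num.int ->
  (nth 0 s 8 + nth 0 s 9 + nth 0 s 10 + nth 0 s 11) / 2 \is a Num.int ->
  inN (tv s).
Proof.
move=> H H1 H2; apply: inN_of.
- by move=> k hk; rewrite coord_mkv // H.
- by rewrite /tv !coord_mkv.
- by rewrite /tv !coord_mkv.
Qed.

Lemma all12 (P : nat -> Prop) : P 0%N -> P 1%N -> P 2%N -> P 3%N -> P 4%N ->
  P 5%N -> P 6%N -> P 7%N -> P 8%N -> P 9%N -> P 10%N -> P 11%N ->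
  forall k, (k < 12)%N -> P k.
Proof.
move=> ? ? ? ? ? ? ? ? ? ? ? ? k.
by do 12! (case: k => [//|k]).
Qed.

Lemma half2 : (1 + 1) / 2 = 1 :> rat. Proof. by []. Qed.

Ltac sm := rewrite /= ?(add0r, addr0, mul0r, subrr, half2, mulr1); rewrite ?(rpred0, rpred1, rpredN) //.

Ltac tst a Hd t v := have := Hd t ltac:(apply: tv_inN; [apply: all12|..]; sm);
  rewrite (_ : lat_form a t = v); [rewrite ?rpredN | by rewrite form_eq /tv !coord_mkv //=; ring].

Theorem lemma4p6 :
  forall a : lat_vec, inNdual a -> qN_is_one a ->
  exists r : lat_vec, inN r /\ lat_form r r = -2 /\
    inN ((2%:R)^-1 *: (r + lat_rho r) - a).
Proof.
move=> a Hd [k0 Hq].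
tst a Hd (tv [:: 0; 1]) (c a 0) => I0.
tst a Hd (tv [:: 1]) (c a 1) => I1.
tst a Hd (tv [:: 0; 0; 0; 1]) (2 * c a 2) => I2.
tst a Hd (tv [:: 0; 0; 1]) (2 * c a 3) => I3.
tst a Hd (tv [:: 0; 0; 0; 0; 1; 1]) (- (c a 4 + c a 5)) => P4.
tst a Hd (tv [:: 0; 0; 0; 0; 1; -1]) (- (c a 4 - c a 5)) => M4.
tst a Hd (tv [:: 0; 0; 0; 0; 0; 0; 1; 1]) (- (c a 6 + c a 7)) => P6.
tst a Hd (tv [:: 0; 0; 0; 0; 0; 0; 1; -1]) (- (c a 6 - c a 7)) => M6.
tst a Hd (tv [:: 0; 0; 0; 0; 1; 0; 1]) (- (c a 4 + c a 6)) => S4.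
tst a Hd (tv [:: 0; 0; 0; 0; 0; 0; 0; 0; 1; 1]) (- (c a 8 + c a 9)) => P8.
tst a Hd (tv [:: 0; 0; 0; 0; 0; 0; 0; 0; 1; -1]) (- (c a 8 - c a 9)) => M8.
tst a Hd (tv [:: 0; 0; 0; 0; 0; 0; 0; 0; 0; 0; 1; 1]) (- (c a 10 + c a 11)) => P10.
tst a Hd (tv [:: 0; 0; 0; 0; 0; 0; 0; 0; 0; 0; 1; -1]) (- (c a 10 - c a 11)) => M10.
tst a Hd (tv [:: 0; 0; 0; 0; 0; 0; 0; 0; 1; 0; 1]) (- (c a 8 + c a 10)) => S8.
exists (tv [:: 2 * c a 2; - (2 * c a 3);
  c a 0 * c a 1 + (2 * c a 2) * (2 * c a 3) - k0%:~R - 1; 1;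
  c a 4 - c a 5; c a 4 + c a 5; c a 6 - c a 7; c a 6 + c a 7;
  c a 8 - c a 9; c a 8 + c a 9; c a 10 - c a 11; c a 10 + c a 11]).
have Ir2 : c a 0 * c a 1 + (2 * c a 2) * (2 * c a 3) - k0%:~R - 1 \is a Num.int.
  by apply: rpredB; [apply: rpredB; [apply: rpredD; apply: rpredM|apply: intr_int]|].
split; [|split].
- apply: tv_inN; [apply: all12| |]; rewrite /= ?rpredN //.
  + by apply: (eqint (c a 4 + c a 6)) => //; field.
  + by apply: (eqint (c a 8 + c a 10)) => //; field.
- rewrite form_eq in Hq; rewrite intrD intrM /= in Hq.
  rewrite form_eq /tv !coord_mkv //=.
  lra.
- apply: inN_of; [apply: all12| |]; rewrite ?combE ?rhoE // /tv !coord_mkv //=.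
  + by apply: (eqint ((c a 0 * c a 1 + (2 * c a 2) * (2 * c a 3) - k0%:~R - 1) - c a 0)); [field | apply: rpredB].
  + by apply: (eqint (1 - 2 * c a 3 - c a 1)); [field | apply: rpredB; [apply: rpredB|]].
  + by apply: (eqint ((c a 0 * c a 1 + (2 * c a 2) * (2 * c a 3) - k0%:~R - 1) - 2 * c a 2)); [field | apply: rpredB].
  all: by apply: (eqint 0); [field | rewrite rpred0].
Qed.
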